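(* Let $\mathcal B$ be a building set on a finite set $S\subset\mathbb N$ of even cardinality. If $\mathcal B$ has a connected component of odd cardinality, then there is no alternating $\mathcal B$-permutation.
   Context: A building set on a finite set $S\subset\mathbb N$ is a collection $\mathcal B$ of nonempty subsets of $S$ containing every singleton $\{i\}$, $i\in S$, such that $I,J\in\mathcal B$ and $I\cap J\neq\emptyset$ imply $I\cup J\in\mathcal B$. Its connected components are the inclusion-maximal elements of $\mathcal B$. For $I\subseteq S$, $\mathcal B|_I=\{J\in\mathcal B:J\subseteq I\}$. For a building set $\mathcal B$ on $S$ with $|S|=m$, a $\mathcal B$-permutation is a sequence $(x_1x_2\cdots x_m)$ listing each element of $S$ exactly once such that for each $1\le i\le m$, $x_i$ and $\max\{x_1,\dots,x_i\}$ lie in the same connected component of $\mathcal B|_{\{x_1,\dots,x_i\}}$. It is alternating if $x_1>x_2<x_3>x_4<\cdots$. *)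

(* Defs.v *)
From mathcomp Require Import all_boot all_order.
From mathcomp Require Import finmap.
Set Implicit Arguments. Unset Strict Implicit. Unset Printing Implicit Defensive.
Local Open Scope fset_scope.

Definition building_set (S : {fset nat}) (B : {fset {fset nat}}) : Prop :=
  [/\ (forall I, I \in B -> I != fset0 /\ I `<=` S),
      (forall i, i \in S -> [fset i] \in B) &
      (forall I J, I \in B -> J \in B -> I `&` J != fset0 -> I `|` J \in B)].

Definition restrict (B : {fset {fset nat}}) (I : {fset nat}) : {fset {fset nat}} :=
  [fset J in B | J `<=` I].

Definition is_component (B : {fset {fset nat}}) (C : {fset nat}) : Prop :=
  C \in B /\ (forall J, J \in B -> C `<=` J -> J = C).

Definition same_component (B : {fset {fset nat}}) (x y : nat) : Prop :=
  exists C, is_component B C /\ x \in C /\ y \in C.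

(* s = (x_1 ... x_m) is a B-permutation: lists each element of S exactly once,
   and for each 1 <= i <= m, x_i and max{x_1..x_i} lie in the same component
   of B|_{x_1..x_i}.  (0-indexed: x_i = nth 0 s i.-1, prefix = take i s.) *)
Definition B_perm (S : {fset nat}) (B : {fset {fset nat}}) (s : seq nat) : Prop :=
  uniq s /\ (forall x, x \in s = (x \in S)) /\
  forall i, 1 <= i <= size s ->
    same_component (restrict B [fset x | x in take i s])
                   (nth 0 s i.-1) (\max_(x <- take i s) x).

(* x_1 > x_2 < x_3 > x_4 < ... (0-indexed: position j even => s_j > s_{j+1}) *)
Definition alternating (s : seq nat) : Prop :=
  forall j, j.+1 < size s ->
    if ~~ odd j then nth 0 s j > nth 0 s j.+1 else nth 0 s j < nth 0 s j.+1.

(* Main.v *)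
Require Import Defs.
From mathcomp Require Import all_boot all_order.
From mathcomp Require Import finmap.
From mathcomp Require Import zify.
Local Open Scope fset_scope.

Lemma leq_max_seq (r : seq nat) x : x \in r -> x <= \max_(y <- r) y.
Proof.
elim: r => [|a r IH] //=; rewrite inE big_cons => /orP [/eqP ->|/IH H].
  by rewrite leq_maxl.
by rewrite (leq_trans H) // leq_maxr.
Qed.

Lemma comp_same {S : {fset nat}} {B : {fset {fset nat}}} {C C' : {fset nat}} {a b : nat} : building_set S B -> is_component B C ->
  C' \in B -> a \in C' -> b \in C' -> a \in C -> b \in C.
Proof.
move=> [_ _ HU] [HC Hmax] HC' Ha Hb HaC.
have HI : C `&` C' != fset0.
  by apply/fset0Pn; exists a; rewrite in_fsetI HaC Ha.
have := Hmax _ (HU _ _ HC HC' HI) (fsubsetUl C C') => E.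
by rewrite -E in_fsetU Hb orbT.
Qed.

Lemma count_even (C : {fset nat}) n : forall s : seq nat, size s = n.*2 ->
  (forall k, k.*2.+1 < size s -> (nth 0 s k.*2 \in C) = (nth 0 s k.*2.+1 \in C)) ->
  ~~ odd (count (mem C) s).
Proof.
elim: n => [|n IH] [|a [|b t]] //= Hs H.
case: Hs => Ht.
have Hab := H 0 isT; rewrite /= in Hab.
rewrite addnA -Hab addnn oddD odd_double /=.
apply: IH => // k Hk.
by apply: (H k.+1); rewrite doubleS !ltnS.
Qed.

Theorem proposition4p2 (S : {fset nat}) (B : {fset {fset nat}}) :
  building_set S B ->
  ~~ odd #|` S| ->
  (exists C, is_component B C /\ odd #|` C|) ->
  ~ (exists s : seq nat, B_perm S B s /\ alternating s).
Proof.
move=> HB HS [C [HC HCodd]] [s [[Hu [Hmem Hperm]] Halt]].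
have Hsize : size s = #|` S|.
  apply: perm_size; apply: uniq_perm => //; first exact: fset_uniq.
have HCS : C `<=` S by case: HB => H1 _ _; case: (H1 _ (proj1 HC)).
have Hpair : forall k, k.*2.+1 < size s ->
    (nth 0 s k.*2 \in C) = (nth 0 s k.*2.+1 \in C).
  move=> k Hk.
  set M := \max_(y <- take k.*2.+1 s) y.
  have HM : \max_(y <- take k.*2.+2 s) y = M.
    rewrite (take_nth 0 Hk) -cats1 big_cat big_seq1 /=.
    apply/maxn_idPl.
    have Ha := Halt k.*2 Hk; rewrite odd_double /= in Ha.
    apply: leq_trans (ltnW Ha) _; apply: leq_max_seq.
    rewrite -(nth_take 0 (ltnSn k.*2)); apply: mem_nth.
    by rewrite size_take Hk.
  have [C1 [[HC1 _] [Ha1 Hb1]]] := Hperm k.*2.+1 (ltnW Hk).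
  have [C2 [[HC2 _] [Ha2 Hb2]]] := Hperm k.*2.+2 Hk.
  rewrite /= HM in Ha2 Hb2.
  move: HC1 HC2; rewrite /restrict !inE => /andP [HC1 _] /andP [HC2 _].
  have {}HC1 : C1 \in B := HC1.
  have {}HC2 : C2 \in B := HC2.
  have {}Ha1 : nth 0 s k.*2 \in C1 := Ha1.
  have {}Hb1 : M \in C1 := Hb1.
  apply/idP/idP => H.
  - apply: (comp_same HB HC HC2 Hb2 Ha2).
    exact: (comp_same HB HC HC1 Ha1 Hb1).
  - apply: (comp_same HB HC HC1 Hb1 Ha1).
    exact: (comp_same HB HC HC2 Ha2 Hb2).
have Hcnt : count (mem C) s = #|` C|.
  rewrite -size_filter; apply: perm_size; apply: uniq_perm.
  - exact: filter_uniq.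
  - exact: fset_uniq.
  move=> x; rewrite mem_filter Hmem.
  have -> : mem C x = (x \in C) by [].
  by case Hx: (x \in C) => //=; rewrite (fsubsetP HCS x Hx).
have Hev : ~~ odd (count (mem C) s).
  apply: (@count_even C (size s)./2) => //.
  by rewrite -[LHS](odd_double_half (size s)) Hsize (negbTE HS).
by rewrite Hcnt HCodd in Hev.
Qed.
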